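(* For $k,d\in\mathbb{Z}_{\ge0}$ let $L^o_{k,d}$ (resp. $L^e_{k,d}$) be the set of pairs of tuples $(\mathbf{k},\mathbf{l})=((k_1,\dots,k_n),(l_1,\dots,l_n))$, $0\le n\le k$, with $k_u\ge1$, $l_u\ge0$, $k_u-1-l_u\ge0$, $k_1+\dots+k_n=k$, such that $s:=\sum_{u=1}^n(k_u-1-l_u)$ satisfies $s\le d$ and $s$ is odd (resp. even); the empty pair ($n=0$, $s=0$) counts as even. Then $|L^o_{0,d}|=|L^o_{1,d}|=0$, $|L^e_{0,d}|=|L^e_{1,d}|=1$; $|L^o_{2,0}|=0$, $|L^o_{2,d}|=1$ for $d\ge1$, $|L^e_{2,d}|=2$; $|L^o_{k,0}|=0$, $|L^e_{0,0}|=1$, $|L^e_{k,0}|=2^{k-1}$ for $k\ge1$; and for $k\ge3$, $d\ge1$, \[|L^o_{k,d}|=2|L^o_{k-1,d}|+|L^e_{k-1,d-1}|-|L^e_{k-2,d-1}|,\qquad |L^e_{k,d}|=2|L^e_{k-1,d}|+|L^o_{k-1,d-1}|-|L^o_{k-2,d-1}|.\] In particular $|L^o_{0,0}|=0$, $|L^e_{0,0}|=1$, and for $k\ge1$, $|L^o_{k,k}|=(F_{2k}-F_k)/2$ and $|L^e_{k,k}|=(F_{2k}+F_k)/2$.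
   Context: $F_j$ denotes the $j$-th Fibonacci number ($F_1=F_2=1$, $F_{j}=F_{j-1}+F_{j-2}$). In the paper each pair $(\mathbf{k},\mathbf{l})$ represents the iterated log-sine integral $\mathrm{Ls}_{\mathbf{k}}^{\mathbf{l}}(\sigma)=(-1)^n\int_0^{\sigma}\int_0^{\theta_n}\cdots\int_0^{\theta_2}\prod_{u}\theta_u^{l_u}(\log|2\sin(\theta_u/2)|)^{k_u-1-l_u}\,d\theta_1\cdots d\theta_n$ at a fixed real $\sigma$. *)

(* Defs.v *)
From mathcomp Require Import all_boot all_order all_algebra.
Set Implicit Arguments. Unset Strict Implicit. Unset Printing Implicit Defensive.

Fixpoint fib (n : nat) : nat :=
  match n with
  | 0 => 0
  | 1 => 1
  | (m.+1 as p).+1 => fib p + fib m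
  end.

(* A pair of tuples (k, l) = ((k_1..k_n),(l_1..l_n)) is encoded as the list
   [:: (k_1,l_1); ...; (k_n,l_n)]. *)
Definition weight (x : seq (nat * nat)) : nat :=
  sumn [seq (p.1 - 1 - p.2)%N | p <- x].

Definition admissible (k : nat) (x : seq (nat * nat)) : bool :=
  all (fun p => (1 <= p.1) && (p.2 <= p.1 - 1)) x && (sumn (map fst x) == k).

Definition inL (par : bool) (k d : nat) (x : seq (nat * nat)) : bool :=
  [&& admissible k x, weight x <= d & odd (weight x) == par].

Fixpoint seqs_of_len {T : Type} (n : nat) (xs : seq T) : seq (seq T) :=
  match n with
  | 0 => [:: [::]]
  | n'.+1 => [seq y :: t | y <- xs, t <- seqs_of_len n' xs]
  end.

(* Candidate superset: all lists of length <= k with entries in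
   {0..k} x {0..k}; every admissible x has n <= k and k_u, l_u <= k.
   This list is duplicate-free. *)
Definition cands (k : nat) : seq (seq (nat * nat)) :=
  flatten [seq seqs_of_len n [seq (a, b) | a <- iota 0 k.+1, b <- iota 0 k.+1]
          | n <- iota 0 k.+1].

Definition cardL (par : bool) (k d : nat) : nat := count (inL par k d) (cands k).

Definition Lo (k d : nat) : nat := cardL true k d.
Definition Le (k d : nat) : nat := cardL false k d.

(* Main.v *)
Require Import Defs.
From mathcomp Require Import all_boot all_order all_algebra.
From mathcomp Require Import zify.
Import GRing.Theory.

Definition jws (k : nat) : seq (nat * nat) :=
  [seq (j, w) | j <- iota 0 k, w <- iota 0 (k - j)].

Definition mkpart (k : nat) (jw : nat * nat) : nat * nat :=
  (k - jw.1, k - jw.1 - 1 - jw.2).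

Fixpoint gen (f k : nat) : seq (seq (nat * nat)) :=
  match f with
  | 0 => if k == 0 then [:: [::]] else [::]
  | f'.+1 => if k == 0 then [:: [::]] else
      [seq mkpart k jw :: t | jw <- jws k, t <- gen f' jw.1]
  end.

Lemma mem_jws k jw : (jw \in jws k) = (jw.1 < k) && (jw.2 < k - jw.1).
Proof.
case: jw => j w; apply/allpairsPdep/idP => [[a [b [ha hb [-> ->]]]]|].
  by move: ha hb; rewrite !mem_iota /= => -> ->.
by move=> /andP[h1 h2]; exists j, w; rewrite !mem_iota /=; split => //; lia.
Qed.

Lemma gen_fuel f g k : k <= f -> k <= g -> gen f k = gen g k.
Proof.
elim: f g k => [|f IH] [|g] [|k] // hf hg.
change (flatten [seq [seq mkpart k.+1 jw :: t | t <- gen f jw.1] | jw <- jws k.+1] = flatten [seq [seq mkpart k.+1 jw :: t | t <- gen g jw.1] | jw <- jws k.+1]).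
congr flatten; apply/eq_in_map => -[j w]; rewrite mem_jws /= => /andP[h1 h2].
by rewrite (IH g) //; lia.
Qed.

Lemma uniq_jws k : uniq (jws k).
Proof.
apply: allpairs_uniq_dep; first exact: iota_uniq.
  by move=> j _; exact: iota_uniq.
by move=> [a b] [c d] _ _ /= [-> ->].
Qed.

Lemma uniq_gen f k : uniq (gen f k).
Proof.
elim: f k => [|f IH] [|k] //.
change (uniq [seq mkpart k.+1 jw :: t | jw <- jws k.+1, t <- gen f jw.1]).
apply: allpairs_uniq_dep; first exact: uniq_jws.
  by move=> *; exact: IH.
move=> [[j1 w1] t1] [[j2 w2] t2] /allpairsPdep[x1 [y1 [hx1 _ E1]]]
  /allpairsPdep[x2 [y2 [hx2 _ E2]]] /=.
move: (congr1 tag E1) (congr1 tag E2) => /= ? ?.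
subst x1 x2; move: hx1 hx2; rewrite !mem_jws /mkpart /= => /andP[h1 h1'] /andP[h2 h2'].
move=> [e1 e2 e3].
have ea : j1 = j2 by lia.
subst j2; have eb : w1 = w2 by lia.
by subst w2 t2.
Qed.

Lemma adm0 x : admissible 0 x = (x == [::]).
Proof.
case: x => [|[a b] t] //=; rewrite /admissible /=.
case: a => [|a] //=; by rewrite addSn !andbF.
Qed.

Lemma admissible_cons k a b t :
  admissible k ((a, b) :: t) =
  [&& 1 <= a, b <= a - 1, a <= k & admissible (k - a) t].
Proof.
rewrite /admissible /=; set s := sumn _.
case: (0 < a) => //=; case: (b <= a - 1) => //=.
case: (all _ t) => /=; last by rewrite andbF.
apply/eqP/andP => [H|[H1 /eqP H2]]; [split; [lia|apply/eqP; lia] | lia].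
Qed.

Lemma mem_gen f k x : k <= f -> (x \in gen f k) = admissible k x.
Proof.
elim: f k x => [|f IH] [|k] x //=; rewrite ?adm0 ?inE //.
move=> hk.
change ((x \in [seq mkpart k.+1 jw :: t | jw <- jws k.+1, t <- gen f jw.1]) = admissible k.+1 x).
apply/allpairsPdep/idP.
  move=> [[j w] [t [hjw ht ->]]]; move: hjw; rewrite mem_jws /= => /andP[h1 h2].
  rewrite IH /= in ht; last lia.
  rewrite /mkpart /= admissible_cons.
  have -> : k.+1 - (k.+1 - j) = j by lia.
  rewrite ht andbT; apply/and3P; split; lia.
case: x => [|[a b] t]; first by rewrite /admissible.
rewrite admissible_cons => /and4P[h1 h2 h3 h4].
exists (k.+1 - a, a - 1 - b), t; split.
- rewrite mem_jws /=; apply/andP; split; lia.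
- rewrite IH /=; last lia.
  done.
- by rewrite /mkpart /=; congr ((_, _) :: _); lia.
Qed.

Lemma weight_cons a b t : weight ((a, b) :: t) = a - 1 - b + weight t.
Proof. by []. Qed.

Lemma adm_bounds k x : admissible k x ->
  [/\ weight x + size x <= k, 0 < k -> 0 < size x &
      all (fun p => (p.1 <= k) && (p.2 <= k)) x].
Proof.
elim: x k => [|[a b] t IH] k; first by rewrite /admissible /= => /eqP <-.
rewrite admissible_cons weight_cons => /and4P[h1 h2 h3 /IH [i1 i2 i3]].
split => //=; first lia.
apply/andP; split; first (apply/andP; split; lia).
apply/allP => p /(allP i3) /andP [q1 q2]; apply/andP; split; lia.
Qed.

Lemma mem_seqs {T : eqType} n (xs : seq T) x :
  (x \in seqs_of_len n xs) = (size x == n) && all (mem xs) x.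
Proof.
elim: n x => [|n IH] x /=; first by rewrite inE; case: x.
apply/allpairsPdep/idP.
  move=> [y [t [hy ht ->]]]; rewrite IH in ht; move/andP: ht => [/eqP hs ha].
  by rewrite /= hs eqxx /= hy ha.
case: x => [|y t] //= /andP[hs /andP[hy ht]]; exists y, t; split => //.
by rewrite IH ht andbT.
Qed.

Lemma uniq_seqs {T : eqType} n (xs : seq T) : uniq xs -> uniq (seqs_of_len n xs).
Proof.
move=> U; elim: n => [|n IH] //=.
apply: allpairs_uniq => //.
by move=> [y1 t1] [y2 t2] _ _ /= [-> ->].
Qed.

Definition pairsk k := [seq (a, b) | a <- iota 0 k.+1, b <- iota 0 k.+1].

Lemma uniq_flatten_size {T : eqType} (F : nat -> seq (seq T)) s :
  uniq s -> (forall n, uniq (F n)) -> (forall n y, y \in F n -> size y = n) ->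
  uniq (flatten [seq F n | n <- s]).
Proof.
move=> Us UF SF; elim: s Us => [|n s IH] //= /andP[ns Us].
rewrite cat_uniq UF IH // andbT.
apply/hasPn => y /flatten_mapP [m ms ym].
apply/negP => yn.
by move: (SF _ _ ym) (SF _ _ yn) => -> Emn; subst m; rewrite ms in ns.
Qed.

Lemma uniq_cands k : uniq (cands k).
Proof.
apply: uniq_flatten_size; first exact: iota_uniq.
  move=> n; apply: uniq_seqs; apply: allpairs_uniq; try exact: iota_uniq.
  by move=> [y1 t1] [y2 t2] _ _ /= [-> ->].
by move=> n y; rewrite mem_seqs => /andP[/eqP].
Qed.

Lemma adm_cands k x : admissible k x -> x \in cands k.
Proof.
move=> /[dup] H /adm_bounds [h1 _ h3].
apply/flatten_mapP; exists (size x); first by rewrite mem_iota; lia.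
rewrite mem_seqs eqxx andTb; apply/allP => [[a b]] /(allP h3) /andP[ha hb]; rewrite /= in ha hb.
by apply/allpairsPdep; exists a, b; rewrite !mem_iota; split => //; lia.
Qed.

Lemma count_uniq_eq {T : eqType} (P : pred T) s t :
  uniq s -> uniq t -> (forall x, P x -> x \in s) -> (forall x, P x -> x \in t) ->
  count P s = count P t.
Proof.
move=> Us Ut Hs Ht; rewrite -!size_filter; apply: perm_size.
apply: uniq_perm; rewrite ?filter_uniq // => x; rewrite !mem_filter.
by case Px: (P x) => //=; rewrite ?Hs ?Ht.
Qed.

Lemma cardL_gen par k d :
  cardL par k d = count (fun x => (weight x <= d) && (odd (weight x) == par)) (gen k k).
Proof.
rewrite /cardL (@count_uniq_eq _ _ _ (gen k k)).
- apply: eq_in_count => x; rewrite mem_gen // /inL => ->; done.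
- exact: uniq_cands.
- exact: uniq_gen.
- by move=> x /andP[H _]; apply: adm_cands.
- by move=> x /andP[H _]; rewrite mem_gen.
Qed.

Definition N k s := count (fun x => weight x == s) (gen k k).

Lemma sum_indic y d (Q : pred nat) :
  \sum_(0 <= s < d.+1 | Q s) ((y == s) : nat) = (y <= d) && Q y.
Proof.
elim: d => [|d IH].
  rewrite big_mkcond big_nat1 /=; case: y => [|y] //=; by case: (Q 0).
rewrite big_mkcond big_nat_recr // -big_mkcond IH /=.
have [->|ne] := eqVneq y d.+1.
  by rewrite ltnn /= leqnn /=; case: (Q d.+1).
case: ifP => _; rewrite ?addn0 ?(negbTE ne) ?addn0 //.
  all: by rewrite (_ : (y <= d.+1) = (y <= d)) //; apply/idP/idP; lia.
Qed.

Lemma count_split {T : Type} (f : T -> nat) (Q : pred nat) d l :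
  count (fun x => (f x <= d) && Q (f x)) l =
  \sum_(0 <= s < d.+1 | Q s) count (fun x => f x == s) l.
Proof.
elim: l => [|x l IH] /=; first by rewrite big1.
by rewrite big_split /= -IH sum_indic.
Qed.

Lemma cardL_N par k d : cardL par k d = \sum_(0 <= s < d.+1 | odd s == par) N k s.
Proof. by rewrite cardL_gen (count_split weight (fun s => odd s == par)). Qed.

Lemma count_allpairs_dep {S T R : Type} (F : S -> T -> R) s t (P : pred R) :
  count P [seq F x y | x <- s, y <- t x] = \sum_(x <- s) count (fun y => P (F x y)) (t x).
Proof.
elim: s => [|x s IH] /=; first by rewrite big_nil.
by rewrite count_cat count_map IH big_cons.
Qed.

Definition g j s w := if w <= s then N j (s - w) else 0.

Lemma NS k s : N k.+1 s = \sum_(0 <= j < k.+1) \sum_(0 <= w < k.+1 - j) g j s w.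
Proof.
rewrite /N.
change (count (fun x => weight x == s) [seq mkpart k.+1 jw :: t | jw <- jws k.+1, t <- gen k jw.1] = \sum_(0 <= j < k.+1) \sum_(0 <= w < k.+1 - j) g j s w).
rewrite count_allpairs_dep /jws big_allpairs_dep /index_iota subn0.
apply: eq_big_seq => j; rewrite mem_iota => /andP[_ hj] /=.
rewrite subn0; apply: eq_big_seq => w; rewrite mem_iota => /andP[_ hw] /=.
have e : forall t, weight (mkpart k.+1 (j, w) :: t) = w + weight t.
  by move=> t; rewrite /mkpart /= weight_cons; lia.
under eq_count => t do rewrite e.
rewrite /g; case: ifP => hws.
  rewrite /N (gen_fuel k j j); [|lia|lia].
  by apply: eq_count => t; apply/eqP/eqP; lia.
rewrite (@eq_count _ _ pred0) ?count_pred0 // => t /=.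
by apply/negbTE/eqP; lia.
Qed.

Definition T k s := \sum_(0 <= j < k) \sum_(0 <= w < k - j) g j s w.
Definition E k s := \sum_(0 <= j < k.+1) g j s (k - j).

Lemma TS k s : T k.+1 s = T k s + E k s.
Proof.
rewrite /T /E big_nat_recr //= [in RHS]big_nat_recr //=.
have -> : \sum_(0 <= j < k) \sum_(0 <= w < k.+1 - j) g j s w =
          \sum_(0 <= j < k) (\sum_(0 <= w < k - j) g j s w + g j s (k - j)).
  apply: eq_big_nat => j hj; rewrite subSn; last lia.
  by rewrite big_nat_recr.
by rewrite big_split /= subSnn big_nat1 subnn !addnA.
Qed.

Lemma ES k s : E k.+1 s.+1 = E k s + N k.+1 s.+1.
Proof.
rewrite /E big_nat_recr //= subnn; congr (_ + _).
apply: eq_big_nat => j hj; rewrite /g subSn; last lia.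
by rewrite ltnS subSS.
Qed.

Lemma E0 k : E k 0 = N k 0.
Proof.
rewrite /E big_nat_recr //= subnn big1_seq ?add0n // => j /andP[_].
rewrite mem_index_iota => hj; rewrite /g; case: ifP => //; lia.
Qed.

Lemma N0 s : N 0 s = (s == 0).
Proof. by rewrite /N /=; case: s. Qed.

Lemma NT k s : 0 < k -> N k s = T k s.
Proof. by case: k => // k _; rewrite NS. Qed.

Lemma R1 k s : N k.+2 s = N k.+1 s + E k.+1 s.
Proof. by rewrite NT // TS -NT. Qed.

Lemma N1 s : N 1 s = (s == 0).
Proof. by rewrite NT // TS /T /E big_nat1 /g subnn leq0n subn0 N0 big_geq. Qed.

Lemma Nrec m s : N m.+3 s.+1 + N m.+1 s = 2 * N m.+2 s.+1 + N m.+2 s.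
Proof. have := R1 m.+1 s.+1; have := R1 m s; rewrite ES; lia. Qed.

Lemma Nrec0 m : N m.+2 0 = 2 * N m.+1 0.
Proof. by rewrite R1 E0; lia. Qed.

Definition h j s := if s is s'.+1 then N j s' else 0.

Lemma hN m s : N m.+3 s + h m.+1 s = 2 * N m.+2 s + h m.+2 s.
Proof. case: s => [|s] /=; [rewrite !addn0; exact: Nrec0 | exact: Nrec]. Qed.

Lemma shift j e par :
  \sum_(0 <= s < e.+2 | odd s == par) h j s = \sum_(0 <= s < e.+1 | odd s == ~~ par) N j s.
Proof.
rewrite big_mkcond big_nat_recl //= if_same add0n [RHS]big_mkcond.
by apply: eq_bigr => i _ /=; case: (odd i); case: par.
Qed.

Lemma Lrec par m e :
  cardL par m.+3 e.+1 + cardL (~~ par) m.+1 e =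
  2 * cardL par m.+2 e.+1 + cardL (~~ par) m.+2 e.
Proof.
rewrite !cardL_N -!shift -!big_split big_distrr -big_split /=.
by apply: eq_bigr => s _; exact: hN.
Qed.

Lemma N_big k s : 0 < k -> k <= s -> N k s = 0.
Proof.
move=> hk hs; apply/eqP; rewrite -leqn0 leqNgt -has_count; apply/hasPn => x.
rewrite mem_gen // => /adm_bounds [b1 b2 _]; have := b2 hk.
by move=> hsz; apply/eqP; lia.
Qed.

Lemma cardL_sat par k d : 0 < k -> k.-1 <= d ->
  cardL par k d = \sum_(0 <= s < k | odd s == par) N k s.
Proof.
move=> hk hd; rewrite cardL_N (@big_cat_nat _ _ _ k) //=; last lia.
rewrite [X in _ + X]big1_seq ?addn0 // => s /andP[_].
by rewrite mem_index_iota => /andP[h1 _]; apply: N_big.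
Qed.

Lemma sat2 par k d d' : 0 < k -> k.-1 <= d -> k.-1 <= d' -> cardL par k d = cardL par k d'.
Proof. by move=> *; rewrite !cardL_sat. Qed.

Lemma base_vals : [/\ Lo 1 1 = 0, Le 1 1 = 1, Lo 2 2 = 1 & Le 2 2 = 2].
Proof. by vm_compute. Qed.

Lemma ABrec par m :
  cardL par m.+3 m.+3 + cardL (~~ par) m.+1 m.+1 =
  2 * cardL par m.+2 m.+2 + cardL (~~ par) m.+2 m.+2.
Proof.
have := Lrec par m m.+2.
have s1 : cardL (~~ par) m.+1 m.+2 = cardL (~~ par) m.+1 m.+1 by apply: sat2 => /=; lia.
have s2 : cardL par m.+2 m.+3 = cardL par m.+2 m.+2 by apply: sat2 => /=; lia.
lia.
Qed.

Lemma fibS n : fib n.+2 = fib n.+1 + fib n.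
Proof. by []. Qed.

Lemma fib_part m :
  (2 * Lo m.+1 m.+1 + fib m.+1 = fib (2 * m.+1) /\ 2 * Le m.+1 m.+1 = fib (2 * m.+1) + fib m.+1) /\
  (2 * Lo m.+2 m.+2 + fib m.+2 = fib (2 * m.+2) /\ 2 * Le m.+2 m.+2 = fib (2 * m.+2) + fib m.+2).
Proof.
elim: m => [|m [[IH1 IH2] [IH3 IH4]]].
  by case: base_vals => -> -> -> ->.
split; first by split.
have e1 := ABrec true m; have e2 := ABrec false m.
rewrite /Lo /Le in IH1 IH2 IH3 IH4 *.
set n := 2 * m.+1 in IH1 IH2.
have -> : 2 * m.+3 = n.+4 by rewrite /n; lia.
rewrite (_ : 2 * m.+2 = n.+2) in IH3 IH4; last by rewrite /n; lia.
have f1 := fibS n.+2; have f2 := fibS n.+1; have f3 := fibS n.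
have f4 := fibS m.+1; have f5 := fibS m.
change (~~ true) with false in e1; change (~~ false) with true in e2.
split; lia.
Qed.

Theorem theorem7 :
  (forall d, [/\ Lo 0 d = 0, Lo 1 d = 0, Le 0 d = 1 & Le 1 d = 1]) /\
  (Lo 2 0 = 0 /\ (forall d, 1 <= d -> Lo 2 d = 1) /\ (forall d, Le 2 d = 2)) /\
  ((forall k, Lo k 0 = 0) /\ Le 0 0 = 1 /\ (forall k, 1 <= k -> Le k 0 = 2 ^ (k - 1))) /\
  (forall k d, 3 <= k -> 1 <= d ->
     ((Lo k d)%:Z = (2 * Lo k.-1 d)%:Z + (Le k.-1 d.-1)%:Z - (Le k.-2 d.-1)%:Z)%R /\
     ((Le k d)%:Z = (2 * Le k.-1 d)%:Z + (Lo k.-1 d.-1)%:Z - (Lo k.-2 d.-1)%:Z)%R) /\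
  (Lo 0 0 = 0 /\ Le 0 0 = 1 /\
   (forall k, 1 <= k ->
      Lo k k = (fib (2 * k) - fib k) %/ 2 /\ Le k k = (fib (2 * k) + fib k) %/ 2)).
Proof.
have L0 : forall par d, cardL par 0 d = ~~ par.
  by move=> par d; rewrite /cardL /cands /=; case: par.
have L1 : forall par d, cardL par 1 d = ~~ par.
  by move=> par d; rewrite (@sat2 par 1 d 0) //; case: par; vm_compute.
have Lk0o : forall k, Lo k 0 = 0.
  by move=> k; rewrite /Lo cardL_N big_mkcond big_nat1.
have Nk0 : forall k, N k.+1 0 = 2 ^ k.
  elim=> [|k IH]; first by rewrite N1.
  by rewrite Nrec0 IH expnS.
have Lk0e : forall k, 1 <= k -> Le k 0 = 2 ^ (k - 1).
  case=> // k _; rewrite /Le cardL_N big_mkcond big_nat1 /= Nk0; congr (2 ^ _); lia.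
split.
  by move=> d; rewrite /Lo /Le !L0 !L1.
split.
  split; first exact: Lk0o.
  split.
    by case=> // d _; rewrite /Lo (@sat2 true 2 d.+1 1) //; vm_compute.
  case=> [|d]; first by rewrite Lk0e.
  by rewrite /Le (@sat2 false 2 d.+1 1) //; vm_compute.
split.
  by split; [exact: Lk0o | split; [rewrite /Le L0 | exact: Lk0e]].
split.
  move=> k d hk hd.
  case: k hk => [|[|[|m]]] // _; case: d hd => [|e] // _.
  have e1 := Lrec true m e; have e2 := Lrec false m e.
  rewrite /= in e1 e2 *; rewrite /Lo /Le.
  split; lia.
split; first by rewrite /Lo L0.
split; first by rewrite /Le L0.
case=> // m _; have [[h1 h2] _] := fib_part m.
split.
  by rewrite (_ : fib (2 * m.+1) - fib m.+1 = Lo m.+1 m.+1 * 2) ?mulnK //; lia.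
by rewrite (_ : fib (2 * m.+1) + fib m.+1 = Le m.+1 m.+1 * 2) ?mulnK //; lia.
Qed.
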